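(* Let $S$ be a $\Gamma$-hemiring. If $\mu$ is a prime fuzzy h-ideal of $S$, then for all $x,y\in S$, $\inf_{s\in S,\ \alpha,\gamma\in\Gamma}\mu(x\alpha s\gamma y)=\max\{\mu(x),\mu(y)\}$. Conversely, if $\mu$ is a fuzzy h-ideal of $S$ with $\operatorname{Im}\mu=\{1,t\}$ for some $t\in[0,1)$ such that $\inf_{s\in S,\ \alpha,\gamma\in\Gamma}\mu(x\alpha s\gamma y)=\max\{\mu(x),\mu(y)\}$ for all $x,y\in S$, then $\mu$ is a prime fuzzy h-ideal of $S$.
   Context: A $\Gamma$-hemiring is a pair of additive commutative semigroups with zero $S$ and $\Gamma$ with a map $S\times\Gamma\times S\to S$, $(a,\alpha,b)\mapsto a\alpha b$, such that for all $a,b,c\in S$, $\alpha,\beta\in\Gamma$: $(a+b)\alpha c=a\alpha c+b\alpha c$; $a\alpha(b+c)=a\alpha b+a\alpha c$; $a(\alpha+\beta)b=a\alpha b+a\beta b$; $a\alpha(b\beta c)=(a\alpha b)\beta c$; $0\alpha a=0=a\alpha0$; $a0b=0=b0a$. A fuzzy h-ideal of $S$ is a map $\mu:S\to[0,1]$, not identically $0$, such that for all $x,y,a,b,z\in S$, $\gamma\in\Gamma$: $\mu(x+y)\ge\min\{\mu(x),\mu(y)\}$; $\mu(x\gamma y)\ge\mu(x)$ and $\mu(x\gamma y)\ge\mu(y)$; $x+a+z=b+z$ implies $\mu(x)\ge\min\{\mu(a),\mu(b)\}$. For fuzzy subsets $\sigma,\theta$, the h-product is $(\sigma\Gamma_h\theta)(x)=\sup\min\{\sigma(a_1),\sigma(a_2),\theta(b_1),\theta(b_2)\}$,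 the supremum over all $z,a_1,a_2,b_1,b_2\in S$, $\gamma,\delta\in\Gamma$ with $x+a_1\gamma b_1+z=a_2\delta b_2+z$, and $0$ if no such expression exists. Inclusion $\sigma\subseteq\mu$ means $\sigma(x)\le\mu(x)$ for all $x$. A fuzzy h-ideal $\mu$ is prime if $\mu$ is not constant and for any fuzzy h-ideals $\sigma,\theta$ of $S$, $\sigma\Gamma_h\theta\subseteq\mu$ implies $\sigma\subseteq\mu$ or $\theta\subseteq\mu$. $\operatorname{Im}\mu$ is the image of $\mu$. *)

(* Defs.v *)
From HB Require Import structures.
From mathcomp Require Import all_boot all_order all_algebra.
From mathcomp Require Import all_classical all_reals.
Set Implicit Arguments. Unset Strict Implicit. Unset Printing Implicit Defensive.
Import Order.TTheory GRing.Theory Num.Theory.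
Local Open Scope classical_set_scope.
Local Open Scope ring_scope.

Record GammaHemiring (S G : Type) := {
  sadd : S -> S -> S;
  szero : S;
  gadd : G -> G -> G;
  gzero : G;
  gmul : S -> G -> S -> S;
  saddA : forall a b c, sadd a (sadd b c) = sadd (sadd a b) c;
  saddC : forall a b, sadd a b = sadd b a;
  sadd0 : forall a, sadd a szero = a;
  gaddA : forall a b c, gadd a (gadd b c) = gadd (gadd a b) c;
  gaddC : forall a b, gadd a b = gadd b a;
  gadd0 : forall a, gadd a gzero = a;
  gmulDl : forall a b c al, gmul (sadd a b) al c = sadd (gmul a al c) (gmul b al c);
  gmulDr : forall a b c al, gmul a al (sadd b c) = sadd (gmul a al b) (gmul a al c);
  gmulDm : forall a b al be, gmul a (gadd al be) b = sadd (gmul a al b) (gmul a be b);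
  gmulA : forall a b c al be, gmul a al (gmul b be c) = gmul (gmul a al b) be c;
  gmul0l : forall a al, gmul szero al a = szero;
  gmul0r : forall a al, gmul a al szero = szero;
  gmul0m : forall a b, gmul a gzero b = szero /\ gmul b gzero a = szero
}.

Section Fuzzy.
Variables (R : realType) (S G : Type) (H : GammaHemiring S G).

Local Notation "a + b" := (sadd H a b).
Local Notation "a * al * b" := (gmul H a al b).

Definition fuzzy_subset (mu : S -> R) : Prop := forall x, 0 <= mu x <= 1.

Definition fuzzy_h_ideal (mu : S -> R) : Prop :=
  fuzzy_subset mu /\
  (exists x, mu x != 0) /\
  (forall x y, Num.min (mu x) (mu y) <= mu (x + y)) /\
  (forall x y (ga : G), mu x <= mu (x * ga * y) /\ mu y <= mu (x * ga * y)) /\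
  (forall x a b z, x + a + z = b + z -> Num.min (mu a) (mu b) <= mu x).

(* h-product; sup of the empty set is 0 in MathComp-Analysis (lemma sup0) *)
Definition hprod (sigma theta : S -> R) (x : S) : R :=
  sup [set v | exists z a1 a2 b1 b2 (ga de : G),
         x + a1 * ga * b1 + z = a2 * de * b2 + z /\
         v = Num.min (Num.min (sigma a1) (sigma a2))
                     (Num.min (theta b1) (theta b2))].

Definition fincl (sigma mu : S -> R) : Prop := forall x, sigma x <= mu x.

Definition prime_fuzzy_h_ideal (mu : S -> R) : Prop :=
  fuzzy_h_ideal mu /\
  (exists x y, mu x != mu y) /\
  (forall sigma theta, fuzzy_h_ideal sigma -> fuzzy_h_ideal theta ->
     fincl (hprod sigma theta) mu -> fincl sigma mu \/ fincl theta mu).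

Definition inf_xsy (mu : S -> R) (x y : S) : R :=
  inf [set v | exists s (al ga : G), v = mu ((x * al * s) * ga * y)].

End Fuzzy.

(* Main.v *)
Require Import Defs.
From mathcomp Require Import all_boot all_order all_algebra.
From mathcomp Require Import all_classical all_reals.
Import Order.TTheory GRing.Theory Num.Theory.
Local Open Scope classical_set_scope.
Local Open Scope ring_scope.

Set Implicit Arguments.
Section Aux.
Variables (R : realType) (S G : Type) (H : GammaHemiring S G).
Local Notation "a + b" := (sadd H a b).
Local Notation "a * al * b" := (gmul H a al b).
Local Notation "0" := (szero H).

Definition hid (I : S -> Prop) : Prop :=
  I 0 /\ (forall a b, I a -> I b -> I (a + b)) /\
  (forall a b ga, I a -> I (a * ga * b)) /\
  (forall a b ga, I b -> I (a * ga * b)) /\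
  (forall u a b z, u + a + z = b + z -> I a -> I b -> I u).

Definition chr (m : R) (I : S -> Prop) (u : S) : R := if `[< I u >] then m else 0%R.

Lemma chrT m I u : I u -> chr m I u = m.
Proof. by move=> h; rewrite /chr asboolT. Qed.
Lemma chrF m I u : ~ I u -> chr m I u = 0%R.
Proof. by move=> h; rewrite /chr asboolF. Qed.

Arguments chrT {m I u}. Arguments chrF {m I u}.
Lemma chr_ideal m I : (0 < m <= 1)%R -> hid I -> fuzzy_h_ideal H (chr m I).
Proof.
move=> /andP[m0 m1] [I0 [ID [IMl [IMr Ih]]]].
have c01 : forall u, (0 <= chr m I u <= 1)%R.
  move=> u; rewrite /chr; case: (asboolP (I u)) => _; last by rewrite lexx ler01.
  by rewrite (ltW m0) m1.
have cge0 : forall u, (0 <= chr m I u)%R by move=> u; case/andP: (c01 u).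
split; first by [].
split; first by exists 0; rewrite chrT // gt_eqF.
split.
  move=> x y; case: (pselect (I x)) => hx; last by rewrite (chrF hx) ge_min cge0.
  case: (pselect (I y)) => hy; last by rewrite (chrF hy) ge_min cge0 orbT.
  by rewrite (chrT hx) (chrT hy) (chrT (ID _ _ hx hy)) minxx.
split.
  move=> x y ga; split.
    case: (pselect (I x)) => hx; last by rewrite (chrF hx).
    by rewrite !chrT //; apply: IMl.
  case: (pselect (I y)) => hy; last by rewrite (chrF hy).
  by rewrite !chrT //; apply: IMr.
move=> x a b z e.
case: (pselect (I a)) => ha; last by rewrite (chrF ha) ge_min cge0.
case: (pselect (I b)) => hb; last by rewrite (chrF hb) ge_min cge0 orbT.
by rewrite !chrT ?minxx //; apply: Ih e ha hb.
Qed.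

Lemma prime_use (mu : S -> R) (m : R) (I J : S -> Prop) :
  prime_fuzzy_h_ideal H mu -> (0 < m <= 1)%R -> hid I -> hid J ->
  (forall a b de, I a -> J b -> (m <= mu (a * de * b))%R) ->
  (forall a, I a -> (m <= mu a)%R) \/ (forall b, J b -> (m <= mu b)%R).
Proof.
move=> [muid [_ pr]] m01 hI hJ IJ.
have [fs [_ [_ [_ muh]]]] := muid.
have mge0 : (0 <= m)%R by case/andP: m01 => /ltW.
have cge0 : forall K u, (0 <= chr m K u)%R.
  by move=> K u; rewrite /chr; case: ifP.
have := pr (chr m I) (chr m J) (@chr_ideal m I m01 hI) (@chr_ideal m J m01 hJ).
case.
- move=> u; rewrite /hprod.
  set E := [set v | _].
  have ub : ubound E (mu u).
    move=> v [z [a1 [a2 [b1 [b2 [ga [de [e ->]]]]]]]].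
    case: (pselect (I a1 /\ I a2 /\ J b1 /\ J b2)) => [[h1 [h2 [h3 h4]]]|nh].
      rewrite !chrT // !minxx.
      apply: le_trans (muh _ _ _ _ e); rewrite le_min; apply/andP; split; exact: IJ.
    apply: le_trans (_ : 0%R <= mu u)%R; last by case/andP: (fs u).
    case: (pselect (I a1)) => h1; last by rewrite (chrF h1) !ge_min lexx.
    case: (pselect (I a2)) => h2; last by rewrite (chrF h2) !ge_min lexx !orbT.
    case: (pselect (J b1)) => h3; last by rewrite (chrF h3) !ge_min lexx !orbT.
    case: (pselect (J b2)) => h4; last by rewrite (chrF h4) !ge_min lexx !orbT.
    by exfalso; apply: nh.
  case: (pselect (E !=set0)) => ne; first exact: ge_sup.
  have -> : E = set0 by apply/seteqP; split => v // Ev; apply: ne; exists v.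
  by rewrite sup0; case/andP: (fs u).
- by move=> h; left => a Ia; have := h a; rewrite chrT.
- by move=> h; right => a Ia; have := h a; rewrite chrT.
Qed.


Lemma part2 (mu : S -> R) (t : R) : fuzzy_h_ideal H mu ->
     (0 <= t < 1)%R ->
     range mu = [set 1%R; t] ->
     (forall x y, inf_xsy H mu x y = Num.max (mu x) (mu y)) ->
     prime_fuzzy_h_ideal H mu.
Proof.
move=> muid /andP[t0 t1] rg infeq.
have vals : forall u, mu u = 1%R \/ mu u = t.
  move=> u; have : range mu (mu u) by exists u.
  by rewrite rg; case => h; [left|right].
split; first exact: muid.
split.
  have : range mu 1%R by rewrite rg; left.
  case=> a _ ha.
  have : range mu t by rewrite rg; right.
  case=> b _ hb.
  by exists a, b; rewrite ha hb eq_sym lt_eqF.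
move=> sigma theta hs ht hpr.
case: (pselect (fincl sigma mu)) => [?|ns]; first by left.
right => y; rewrite leNgt; apply/negP => hy.
move/existsNP: ns => [x /negP]; rewrite -ltNge => hx.
have [fss _] := hs; have [fst _] := ht.
have [_ [_ [_ [hsm _]]]] := hs; have [_ [_ [_ [htm _]]]] := ht.
have mxt : mu x = t.
  case: (vals x) => // e; move: hx; rewrite e => hx.
  by case/andP: (fss x) => _ /(lt_le_trans hx); rewrite ltxx.
have myt : mu y = t.
  case: (vals y) => // e; move: hy; rewrite e => hy.
  by case/andP: (fst y) => _ /(lt_le_trans hy); rewrite ltxx.
have := infeq x y; rewrite mxt myt maxxx /inf_xsy.
set E := [set v | _] => infE.
case: (pselect (exists s al ga, mu ((x * al * s) * ga * y) = t)) => [[s [al [ga hw]]]|hn]; last first.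
  have lb : lbound E 1%R.
    move=> v [s [al [ga ->]]]; case: (vals ((x * al * s) * ga * y)) => [->//|e].
    by exfalso; apply: hn; exists s, al, ga.
  have : (1 <= inf E)%R.
    apply: lb_le_inf => //; exists (mu ((x * gzero H * x) * gzero H * y)).
    by exists x, (gzero H), (gzero H).
  by rewrite infE leNgt t1.
set w := (x * al * s) * ga * y.
have := hpr w; rewrite /hprod hw.
set F := [set v | _].
have Fv : F (Num.min (Num.min (sigma (szero H)) (sigma (x * al * s))) (Num.min (theta y) (theta y))).
  exists (szero H), (szero H), (x * al * s), y, y, ga, ga; split => //.
  by rewrite gmul0l !sadd0.
have : (Num.min (Num.min (sigma (szero H)) (sigma (x * al * s))) (Num.min (theta y) (theta y)) <= sup F)%R.
  apply: sup_upper_bound => //; split; first by exists (Num.min (Num.min (sigma (szero H)) (sigma (x * al * s))) (Num.min (theta y) (theta y))).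
  exists 1%R => v [z [a1 [a2 [b1 [b2 [g [d [_ ->]]]]]]]].
  rewrite !ge_min; case/andP: (fss a1) => _ ->; by [].
move=> h1 h2; have := le_trans h1 h2.
have s0 : (sigma x <= sigma (szero H))%R.
  by have [<- _] := gmul0m H x x; have [-> _] := hsm x x (gzero H).
have s1 : (sigma x <= sigma (x * al * s))%R by have [-> _] := hsm x s al.
rewrite minxx ge_min.
case/orP; [rewrite ge_min; case/orP|] => h.
- by have := lt_le_trans hx (le_trans s0 h); rewrite mxt ltxx.
- by have := lt_le_trans hx (le_trans s1 h); rewrite mxt ltxx.
- by have := lt_le_trans hy h; rewrite myt ltxx.
Qed.


Lemma part1 (mu : S -> R) : prime_fuzzy_h_ideal H mu ->
     forall x y, inf_xsy H mu x y = Num.max (mu x) (mu y).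
Proof.
move=> pr x y.
have [muid _] := pr.
have [fs [_ [madd [mmul mh]]]] := muid.
have mge0 : forall u, (0%R <= mu u)%R by move=> u; case/andP: (fs u).
have mle1 : forall u, (mu u <= 1)%R by move=> u; case/andP: (fs u).
rewrite /inf_xsy; set E := [set v | _].
have Ene : E !=set0 by exists (mu ((x * gzero H * x) * gzero H * y)); exists x, (gzero H), (gzero H).
have lbE : lbound E (Num.max (mu x) (mu y)).
  move=> v [s [al [ga ->]]]; rewrite ge_max; apply/andP; split.
    apply: le_trans (proj1 (mmul _ _ _)) _; exact: (proj1 (mmul _ _ _)).
  exact: (proj2 (mmul _ _ _)).
have ge := lb_le_inf Ene lbE.
apply/eqP; rewrite eq_le ge andbT leNgt; apply/negP => lt.
set m := inf E in lt ge.
have hlb : forall s al ga, (m <= mu ((x * al * s) * ga * y))%R.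
  move=> s al ga; apply: (ge_inf (E := E)); last by exists s, al, ga.
  by exists 0%R => v [s' [al' [ga' ->]]].
have m0 : (0 < m)%R by apply: le_lt_trans lt; rewrite le_max mge0.
have m1 : (m <= 1)%R by apply: le_trans (hlb x (gzero H) (gzero H)) _.
have m01 : (0 < m <= 1)%R by rewrite m0 m1.
pose P u := (m <= mu u)%R.
have P0 : P 0.
  by have := hlb 0 (gzero H) (gzero H); rewrite gmul0r gmul0l.
have PD : forall a b, P a -> P b -> P (a + b).
  move=> a b ha hb; apply: le_trans (madd a b); by rewrite le_min; apply/andP.
have PMl : forall a b ga, P a -> P (a * ga * b).
  by move=> a b ga ha; apply: le_trans ha (proj1 (mmul _ _ _)).
have PMr : forall a b ga, P b -> P (a * ga * b).
  by move=> a b ga hb; apply: le_trans hb (proj2 (mmul _ _ _)).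
have Ph : forall u a b z, u + a + z = b + z -> P a -> P b -> P u.
  move=> u a b z e ha hb; apply: le_trans (mh _ _ _ _ e); by rewrite le_min; apply/andP.
pose I a := forall s al ga, P ((a * al * s) * ga * y).
pose J b := forall a de, I a -> P (a * de * b).
pose K c := forall s ga, P (s * ga * c).
have hI : hid I.
  split; first by move=> s al ga; rewrite gmul0l gmul0l.
  split; first by move=> a b ha hb s al ga; rewrite !gmulDl; apply: PD.
  split; first by move=> a b be ha s al ga; rewrite -[(a * be * b) * al * s]gmulA; apply: ha.
  split; first by move=> a b be hb s al ga; rewrite -[(a * be * b) * al * s]gmulA -gmulA; apply: PMr.
  move=> u a b z e ha hb s al ga; apply: (Ph _ ((a * al * s) * ga * y) ((b * al * s) * ga * y) ((z * al * s) * ga * y)) => //.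
  by rewrite -!gmulDl e.
have hJ : hid J.
  split; first by move=> a de _; rewrite gmul0r.
  split; first by move=> a b ha hb c de hc; rewrite gmulDr; apply: PD; [apply: ha|apply: hb].
  split; first by move=> a b be ha c de hc; rewrite gmulA; apply: PMl; apply: ha.
  split.
    move=> a b be hb c de hc; rewrite gmulA; apply: hb.
    by move=> s al ga; rewrite -[(c * de * a) * al * s]gmulA; apply: hc.
  move=> u a b z e ha hb c de hc; apply: (Ph _ (c * de * a) (c * de * b) (c * de * z)); [|exact: ha|exact: hb].
  by rewrite -!gmulDr e.
have hIx : I x by move=> s al ga; exact: hlb.
have := @prime_use mu m I J pr m01 hI hJ (fun a b de ha hb => hb a de ha).
case=> [hIP|hJP].
  by move: (hIP x hIx); rewrite /P => hx; move: lt; rewrite ltNge le_max hx.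
have Ky : K y.
  move=> s ga; apply: hJP => a de ha; rewrite gmulA; exact: ha.
have hK : hid K.
  split; first by move=> s ga; rewrite gmul0r.
  split; first by move=> a b ha hb s ga; rewrite gmulDr; apply: PD.
  split; first by move=> a b be ha s ga; rewrite gmulA; apply: PMl.
  split; first by move=> a b be hb s ga; rewrite gmulA; apply: hb.
  move=> u a b z e ha hb s ga; apply: (Ph _ (s * ga * a) (s * ga * b) (s * ga * z)) => //.
  by rewrite -!gmulDr e.
have := @prime_use mu m K K pr m01 hK hK (fun a b de ha hb => hb a de).
case=> hKP; move: (hKP y Ky); rewrite /P => hy; move: lt; by rewrite ltNge le_max hy orbT.
Qed.

End Aux.

Theorem proposition3p16 (R : realType) (S G : Type) (H : GammaHemiring S G) :
  (forall mu : S -> R, prime_fuzzy_h_ideal H mu ->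
     forall x y, inf_xsy H mu x y = Num.max (mu x) (mu y)) /\
  (forall (mu : S -> R) (t : R), fuzzy_h_ideal H mu ->
     0 <= t < 1 ->
     range mu = [set 1; t] ->
     (forall x y, inf_xsy H mu x y = Num.max (mu x) (mu y)) ->
     prime_fuzzy_h_ideal H mu).
Proof.
split; [exact: part1|exact: part2].
Qed.
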